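(* Let $\{a_n\}_{n\in\mathbb Z}$ be i.i.d. random variables with values in $\{1,2,\dots\}$ with $\mathbb E[a_0]<\infty$ and $\mathbb P[a_0=1]>0$. Let $f(n)=n+a_n$ and let $T^f$ be the directed graph with vertex set $\mathbb Z$ and edge set $\{(n,f(n)):n\in\mathbb Z\}$. Then almost surely $T^f$ has only one connected component, i.e. for every $n\in\mathbb Z$ the set $C(n)=\{m\in\mathbb Z:\exists\, i,j\ge 0 \text{ with } f^i(n)=f^j(m)\}$ equals $\mathbb Z$.
   Context: $f^i$ denotes the $i$-th iterate of $f$, with $f^0$ the identity. *)

(* Defs.v *)
From HB Require Import structures.
From mathcomp Require Import all_boot all_order all_algebra.
From mathcomp Require Import all_classical all_reals all_analysis.
Set Implicit Arguments. Unset Strict Implicit. Unset Printing Implicit Defensive.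
Import Order.TTheory GRing.Theory Num.Theory.
Local Open Scope classical_set_scope.
Local Open Scope ring_scope.

Definition nat_rv_family d (T : measurableType d) (a : int -> T -> nat) : Prop :=
  forall (n : int) (k : nat), measurable (a n @^-1` [set k]).

(* Mutual independence: product rule over every finite family of distinct
   indices, for arbitrary target sets (nat carries the discrete sigma-algebra). *)
Definition mutually_independent d (T : measurableType d) (R : realType)
  (P : probability T R) (a : int -> T -> nat) : Prop :=
  forall (s : seq int) (B : int -> set nat), uniq s ->
    P (\big[setI/setT]_(i <- s) (a i @^-1` B i)) =
    (\prod_(i <- s) P (a i @^-1` B i))%E.

Definition identically_distributed d (T : measurableType d) (R : realType)
  (P : probability T R) (a : int -> T -> nat) : Prop :=
  forall (n : int) (B : set nat), P (a n @^-1` B) = P (a 0 @^-1` B).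

Definition fmap d (T : measurableType d) (a : int -> T -> nat) (x : T) (n : int) : int :=
  n + (a n x)%:Z.

Definition component d (T : measurableType d) (a : int -> T -> nat) (x : T) (n : int) : set int :=
  [set m | exists i j : nat, iter i (fmap a x) n = iter j (fmap a x) m].

(* Main.v *)
Require Import Defs.
From HB Require Import structures.
From mathcomp Require Import all_boot all_order all_algebra.
From mathcomp Require Import all_classical all_reals all_analysis.
From mathcomp Require Import measurable_realfun.
From mathcomp Require Import ring lra zify.
Import Order.TTheory GRing.Theory Num.Theory.
Local Open Scope classical_set_scope.
Local Open Scope ring_scope.

Section Main.
Context d (T : measurableType d) (R : realType) (P : probability T R) (a : int -> T -> nat).
Hypothesis ha : nat_rv_family a.
Hypothesis hind : mutually_independent P a.
Hypothesis hid : identically_distributed P a.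
Hypothesis ha1 : forall n x, (1 <= a n x)%N.
Hypothesis hp : (0 < P (a 0%R @^-1` [set 1%N]))%E.
Hypothesis hint : (\int[P]_x ((a 0%R x)%:R : R)%:E < +oo)%E.

Definition ev (i : int) (B : set nat) : set T := a i @^-1` B.

Lemma ev_meas i B : measurable (ev i B).
Proof.
have -> : ev i B = \bigcup_(k in B) (a i @^-1` [set k]).
  by rewrite /ev; apply/seteqP; split => [x /= Bx|x [k Bk /= ->]]; [exists (a i x)|].
by apply: bigcup_measurable => k _; exact: ha.
Qed.

Definition pr (E : set T) : R := fine (P E).

Lemma prE E : measurable E -> P E = (pr E)%:E.
Proof. by move=> mE; rewrite /pr fineK //; apply: fin_num_measure. Qed.

Lemma pr_ge0 E : 0 <= pr E.
Proof. by rewrite /pr fine_ge0 // measure_ge0. Qed.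

Lemma pr_le1 E : measurable E -> pr E <= 1.
Proof. by move=> mE; have := probability_le1 P mE; rewrite prE // lee_fin. Qed.

Lemma prT : pr setT = 1.
Proof. by rewrite /pr probability_setT. Qed.

Lemma prD E F : measurable E -> measurable F -> pr (E `\` F) = pr E - pr (E `&` F).
Proof.
move=> mE mF; have hE : (P E < +oo)%E by rewrite prE // ltry.
rewrite /pr measureD // fineB //; apply: fin_num_measure => //; exact: measurableI.
Qed.

Lemma prC E : measurable E -> pr (~` E) = 1 - pr E.
Proof. by move=> mE; rewrite -setTD prD // setTI prT. Qed.

Lemma prU E F : measurable E -> measurable F -> pr (E `|` F) <= pr E + pr F.
Proof.
move=> mE mF; rewrite -lee_fin EFinD -(prE _ mE) -(prE _ mF) -prE; last exact: measurableU.
exact: measureU2.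
Qed.

Lemma pr_le E F : measurable E -> measurable F -> E `<=` F -> pr E <= pr F.
Proof.
move=> mE mF EF; rewrite -lee_fin -(prE _ mE) -(prE _ mF).
by apply: le_measure => //; rewrite inE.
Qed.

Definition Rect (s : seq int) (B : int -> set nat) : set T :=
  \big[setI/setT]_(i <- s) ev i (B i).

Lemma Rect_meas s B : measurable (Rect s B).
Proof.
rewrite /Rect; elim: s => [|i s IH]; first by rewrite big_nil.
by rewrite big_cons; apply: measurableI => //; exact: ev_meas.
Qed.

Lemma in_Rect s B x : Rect s B x <-> (forall i, i \in s -> B i (a i x)).
Proof.
rewrite /Rect; elim: s => [|j s IH]; first by rewrite big_nil.
rewrite big_cons; split.
  move=> [h1 /IH h2] i; rewrite inE => /orP[/eqP ->//|]; exact: h2.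
move=> h; split; first by apply: h; rewrite inE eqxx.
by apply/IH => i hi; apply: h; rewrite inE hi orbT.
Qed.

Lemma pr_Rect s B : uniq s -> pr (Rect s B) = \prod_(i <- s) pr (ev i (B i)).
Proof.
move=> us; rewrite /pr /Rect /ev (hind s B us).
rewrite (eq_bigr (fun i => (pr (ev i (B i)))%:E)); last first.
  by move=> i _; rewrite -prE //; exact: ev_meas.
by rewrite prodEFin.
Qed.

Lemma Rect_cat s1 s2 B1 B2 : (forall i, i \in s2 -> i \notin s1) ->
  Rect s1 B1 `&` Rect s2 B2 =
  Rect (s1 ++ s2) (fun i => if i \in s1 then B1 i else B2 i).
Proof.
move=> H; rewrite /Rect big_cat /=; congr (_ `&` _).
  by apply: eq_big_seq => i Hi /=; rewrite Hi.
by apply: eq_big_seq => i Hi /=; rewrite (negbTE (H i Hi)).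
Qed.


Lemma uniq_cat_dis (s1 s2 : seq int) : uniq s1 -> uniq s2 ->
  (forall i, i \in s2 -> i \notin s1) -> uniq (s1 ++ s2).
Proof.
move=> u1 u2 H; rewrite cat_uniq u1 u2 andbT /=.
by apply/hasPn => i hi; exact: H.
Qed.

Lemma pr_Rect_cat s1 s2 B1 B2 : uniq s1 -> uniq s2 ->
  (forall i, i \in s2 -> i \notin s1) ->
  pr (Rect (s1 ++ s2) (fun i => if i \in s1 then B1 i else B2 i)) =
  pr (Rect s1 B1) * pr (Rect s2 B2).
Proof.
move=> u1 u2 H; rewrite pr_Rect; last exact: uniq_cat_dis.
rewrite big_cat /= !pr_Rect //; congr (_ * _).
  by apply: eq_big_seq => i Hi /=; rewrite Hi.
by apply: eq_big_seq => i Hi /=; rewrite (negbTE (H i Hi)).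
Qed.

Definition Acomp (S : nat -> seq int) (Bk : nat -> int -> set nat) (K : nat) : set T :=
  \big[setI/setT]_(k < K) ~` Rect (S k) (Bk k).

Lemma Acomp_meas S Bk K : measurable (Acomp S Bk K).
Proof.
rewrite /Acomp; elim: K => [|K IH]; first by rewrite big_ord0.
rewrite big_ord_recr /=; apply: measurableI => //.
exact/measurableC/Rect_meas.
Qed.

Lemma indep_compl S Bk (uS : forall k, uniq (S k))
  (dS : forall k k' i, k != k' -> i \in S k -> i \notin S k') :
  forall K s0 B0, uniq s0 ->
  (forall k i, (k < K)%N -> i \in s0 -> i \notin S k) ->
  pr (Rect s0 B0 `&` Acomp S Bk K) =
  pr (Rect s0 B0) * \prod_(k < K) (1 - pr (Rect (S k) (Bk k))).
Proof.
elim=> [|K IH] s0 B0 us0 ds0.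
  by rewrite /Acomp !big_ord0 setIT mulr1.
rewrite /Acomp big_ord_recr /= big_ord_recr /=.
set X := Rect s0 B0.
set Rest := \big[setI/setT]_(i < K) ~` Rect (S i) (Bk i).
set A := Rect (S K) (Bk K).
have -> : X `&` (Rest `&` ~` A) = (X `&` Rest) `\` A by rewrite setDE setIA.
have mRest : measurable Rest by exact: (Acomp_meas S Bk K).
rewrite prD; [|apply: measurableI => //; exact: Rect_meas|exact: Rect_meas].
have -> : X `&` Rest `&` A = (X `&` A) `&` Rest by rewrite setIAC.
have hdis : forall i, i \in S K -> i \notin s0.
  by move=> i hi; apply/negP => /(ds0 K i (ltnSn K)); rewrite hi.
have ds0' : forall k i, (k < K)%N -> i \in s0 -> i \notin S k.
  by move=> k i hk; apply: ds0; exact: ltnW.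
rewrite /X /A (Rect_cat _ _ _ _ hdis).
have := IH s0 B0 us0 ds0'; rewrite /Acomp -/Rest => ->.
rewrite IH; last first.
- move=> k i hk; rewrite mem_cat => /orP[]; first exact: ds0'.
  by apply: dS; rewrite neq_ltn hk orbT.
- exact: uniq_cat_dis.
rewrite pr_Rect_cat //; ring.
Qed.

Lemma reach x (N : int) (c : nat) :
  (forall i, (i < c)%N -> (a (N + i%:Z) x <= c - i)%N) ->
  forall i, (i <= c)%N -> exists k, iter k (Defs.fmap a x) (N + i%:Z) = N + c%:Z.
Proof.
move=> H i; move: {2}(c - i)%N (leqnn (c - i)) => r; elim: r i => [|r IH] i hr hi.
  by exists 0%N; have -> : i = c by lia.
have [->|ne] := eqVneq i c; first by exists 0%N.
have lt : (i < c)%N by rewrite ltn_neqAle ne hi.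
have h1 := H i lt; have h2 := ha1 (N + i%:Z) x.
have [k hk] := IH (i + a (N + i%:Z) x)%N ltac:(lia) ltac:(lia).
exists k.+1; rewrite iterSr -hk; congr iter.
by rewrite /Defs.fmap PoszD addrA.
Qed.

Lemma comp_of x (N : int) (c : nat) i j :
  (forall i, (i < c)%N -> (a (N + i%:Z) x <= c - i)%N) ->
  (i <= c)%N -> (j <= c)%N -> component a x (N + i%:Z) (N + j%:Z).
Proof.
move=> H hi hj; have [k1 h1] := reach x N c H i hi; have [k2 h2] := reach x N c H j hj.
by exists k1, k2; rewrite h1 h2.
Qed.

Lemma meas_comp i (g : nat -> \bar R) : measurable_fun setT (fun x => g (a i x)).
Proof.
move=> _ Y _; rewrite setTI.
have -> : (fun x => g (a i x)) @^-1` Y = ev i (g @^-1` Y) by [].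
exact: ev_meas.
Qed.

Definition rt (t : nat) : R := pr (ev 0 [set v | (t < v)%N]).

Lemma rt_ge0 t : 0 <= rt t.
Proof. exact: pr_ge0. Qed.

Lemma int_ind t : (\int[P]_x ((t < a 0%R x)%N%:R : R)%:E =
  P (ev 0 [set v | (t < v)%N]))%E.
Proof.
transitivity (\int[P]_x (\1_(ev 0 [set v | (t < v)%N]) x)%:E)%E; last first.
  by rewrite integral_indic ?setIT //; exact: ev_meas.
apply: eq_integral => x _; rewrite indicE.
case: (boolP (x \in _)) => [/set_mem h|hn]; first by rewrite (h : (t < a 0%R x)%N).
have hf : ~~ (t < a 0%R x)%N.
  by apply/negP => h; apply/(negP hn)/mem_set; exact: h.
by rewrite (negbTE hf).
Qed.

Lemma natsum_le (v u : nat) : (\sum_(t < u) (t < v)%N <= v)%N.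
Proof.
suff -> : (\sum_(t < u) (t < v)%N = minn u v)%N by exact: geq_minr.
elim: u => [|u IH]; first by rewrite big_ord0 min0n.
rewrite big_ord_recr /= IH; case: ltnP => h /=; lia.
Qed.

Definition Ea : R := fine (\int[P]_x ((a 0%R x)%:R : R)%:E).

Lemma sum_rt_le u : \sum_(t < u) rt t <= Ea.
Proof.
rewrite -lee_fin -sumEFin.
have -> : Ea%:E = (\int[P]_x ((a 0 x)%:R : R)%:E)%E.
  by rewrite /Ea fineK // ge0_fin_numE // integral_ge0 // => x _; rewrite lee_fin.
rewrite (eq_bigr (fun t : 'I_u => \int[P]_x ((t < a 0%R x)%N%:R : R)%:E)%E); last first.
  by move=> t _; rewrite int_ind prE //; exact: ev_meas.
rewrite -ge0_integral_sum //.
apply: ge0_le_integral => //.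
- by move=> x _; apply: sume_ge0 => t _; rewrite lee_fin ler0n.
- exact: (meas_comp 0 (fun v => \sum_(t < u) ((t < v)%N%:R : R)%:E)%E).
- exact: (meas_comp 0 (fun v => (v%:R : R)%:E)).
move=> x _; rewrite sumEFin lee_fin -natr_sum ler_nat.
exact: natsum_le.
all: try (by move=> t x _; rewrite lee_fin ler0n).
all: by move=> t; exact: (meas_comp 0 (fun v => ((t < v)%N%:R : R)%:E)).
Qed.

Definition Qs (n : nat) : R := \sum_(0 <= t < n) rt t.

Lemma tail_small eps : 0 < eps ->
  exists L, forall u v, (L <= u)%N -> \sum_(u <= t < v) rt t <= eps.
Proof.
move=> e0.
have hs : has_sup (range Qs).
  split; first by exists (Qs 0); exists 0%N.
  by exists Ea => x [n _ <-]; rewrite /Qs big_mkord; exact: sum_rt_le.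
have [e [n _ <-] he] := sup_adherent e0 hs.
exists n => u v hu.
case: (leqP v u) => hv; first by rewrite big_geq // ltW.
have Qv : Qs v <= sup (range Qs) by apply: sup_upper_bound => //; exists v.
have Quv : Qs v = Qs u + \sum_(u <= t < v) rt t.
  by rewrite /Qs (@big_cat_nat _ _ _ u) //= ltnW.
have Qnu : Qs u = Qs n + \sum_(n <= t < u) rt t.
  by rewrite /Qs (@big_cat_nat _ _ _ n).
have s0 : 0 <= \sum_(n <= t < u) rt t by apply: sumr_ge0 => t _; exact: rt_ge0.
lra.
Qed.

Definition p1 : R := pr (ev 0 [set 1%N]).

Lemma p1_gt0 : 0 < p1.
Proof. by have := hp; rewrite (prE (ev 0 [set 1%N])) ?lte_fin //; exact: ev_meas. Qed.

Lemma p1_le1 : p1 <= 1.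
Proof. exact/pr_le1/ev_meas. Qed.

Lemma rt_le1 t : rt t <= 1.
Proof. exact/pr_le1/ev_meas. Qed.

Lemma y_ge_p t : (1 <= t)%N -> p1 <= 1 - rt t.
Proof.
move=> ht; rewrite /rt -prC; last exact: ev_meas.
apply: pr_le; [exact: ev_meas|exact/measurableC/ev_meas|].
by move=> x; rewrite /ev /= => ->; apply/negP; rewrite -leqNgt.
Qed.

Lemma prod_ge (s : seq nat) (x : nat -> R) : (forall i, 0 <= x i <= 1) ->
  1 - \sum_(i <- s) x i <= \prod_(i <- s) (1 - x i).
Proof.
move=> hx; elim: s => [|i s IH]; first by rewrite !big_nil; lra.
rewrite !big_cons; have /andP[h0 h1] := hx i.
have s0 : 0 <= \sum_(j <- s) x j by apply: sumr_ge0 => j _; have /andP[] := hx j.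
nra.
Qed.

Lemma lowb : exists c0 : R, [/\ 0 < c0, c0 <= 1 &
  forall l, c0 <= \prod_(i < l) (1 - rt i.+1)].
Proof.
have e0 : (0 : R) < 2^-1 by rewrite invr_gt0 ltr0n.
have [L hL] := tail_small _ e0.
have pL0 : 0 < p1 ^+ L by exact: exprn_gt0 p1_gt0.
have pL1 : p1 ^+ L <= 1 by apply: exprn_ile1; [exact: ltW p1_gt0|exact: p1_le1].
exists (p1 ^+ L / 2); split; [by apply: divr_gt0|lra|move=> l].
have hge : forall m, p1 ^+ m <= \prod_(i < m) (1 - rt i.+1).
  move=> m; have -> : p1 ^+ m = \prod_(i < m) p1 by rewrite prodr_const card_ord.
  apply: ler_prod => i _; rewrite (ltW p1_gt0) /=; exact: y_ge_p.
case: (leqP l L) => hl.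
  have := hge l; have : p1 ^+ L <= p1 ^+ l.
    by apply: ler_wiXn2l => //; [exact: ltW p1_gt0|exact: p1_le1].
  lra.
have -> : \prod_(i < l) (1 - rt i.+1) = \prod_(0 <= i < l) (1 - rt i.+1) by rewrite big_mkord.
rewrite (@big_cat_nat _ _ _ L 0 l) //=; last exact: ltnW.
rewrite big_mkord.
have h1 := hge L.
have h2 : 1 - \sum_(L <= i < l) rt i.+1 <= \prod_(L <= i < l) (1 - rt i.+1).
  by apply: prod_ge => i; rewrite rt_ge0 rt_le1.
have h3 : \sum_(L <= i < l) rt i.+1 <= 2^-1.
  by have := hL L.+1 l.+1 (leqnSn L); rewrite big_add1 /=.
have h4 : 0 <= \prod_(i < L) (1 - rt i.+1) by lra.
nra.
Qed.

Lemma rev_prod (F : nat -> R) b l :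
  \prod_(b <= i < b + l) F (b + l - i)%N = \prod_(0 <= i < l) F i.+1.
Proof.
rewrite -{1}[b]add0n big_addn addKn big_nat_rev /=.
by apply: eq_big_nat => i /andP[_ hi]; congr F; lia.
Qed.

Lemma rev_sum (F : nat -> R) b l :
  \sum_(i < b) F (b + l - i)%N = \sum_(l.+1 <= t < l.+1 + b) F t.
Proof.
have -> : \sum_(i < b) F (b + l - i)%N = \sum_(0 <= i < b) F (b + l - i)%N.
  by rewrite big_mkord.
rewrite -{1}[l.+1]add0n big_addn addKn big_nat_rev /=.
by apply: eq_big_nat => i /andP[_ hi]; congr F; lia.
Qed.

Lemma pr_bigU n (E : nat -> set T) : (forall i, measurable (E i)) ->
  pr (\big[setU/set0]_(i < n) E i) <= \sum_(i < n) pr (E i).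
Proof.
move=> mE; elim: n => [|n IH]; first by rewrite !big_ord0 /pr measure0.
rewrite !big_ord_recr /=.
have mU : measurable (\big[setU/set0]_(i < n) E i) by apply: bigsetU_measurable.
by apply: le_trans (prU _ _ mU (mE n)) _; rewrite lerD2r.
Qed.

Lemma sub_bigU n (E : nat -> set T) (i : 'I_n) :
  E i `<=` \big[setU/set0]_(j < n) E j.
Proof. by move=> x Ex; rewrite (bigD1 i) //=; left. Qed.

Lemma in_bigI n (E : nat -> set T) x :
  (\big[setI/setT]_(j < n) E j) x <-> (forall j : 'I_n, E j x).
Proof.
elim: n => [|n IH]; first by rewrite big_ord0; split => // _ [].
rewrite big_ord_recr /=; split.
  move=> [/IH h1 h2] j; have [hj|hj] := ltnP j n; first exact: (h1 (Ordinal hj)).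
  by have -> : nat_of_ord j = n by have := ltn_ord j; lia.
move=> h; split; last exact: (h ord_max).
by apply/IH => j; exact: (h (widen_ord (leqnSn n) j)).
Qed.

Lemma ev_shift (i : int) B : pr (ev i B) = pr (ev 0 B).
Proof. by rewrite /pr /ev hid. Qed.

Lemma ev_le t : pr (ev 0 [set v | (v <= t)%N]) = 1 - rt t.
Proof.
rewrite /rt -prC; last exact: ev_meas.
congr pr; apply/seteqP; split => x; rewrite /ev /=; lia.
Qed.

Section Pair.
Variables (N : int) (Dm l : nat).

Definition cc k := (Dm + k.+1 * l)%N.
Definition bb k := (Dm + k * l)%N.
Definition Sk k : seq int := [seq N + i%:Z | i <- index_iota (bb k) (cc k)].
Definition Bkk k : int -> set nat := fun j => [set v | (v <= cc k - `|j - N|)%N].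
Definition Far k : set T :=
  \big[setU/set0]_(i < bb k) ev (N + i%:Z) [set v | (cc k - i < v)%N].

Lemma ccE k : cc k = (bb k + l)%N.
Proof. by rewrite /cc /bb mulSn; lia. Qed.

Lemma Sk_uniq k : uniq (Sk k).
Proof.
rewrite map_inj_uniq ?iota_uniq // => i j /addrI /eqP.
by rewrite eqz_nat => /eqP.
Qed.

Lemma mem_Sk k j : j \in Sk k -> exists i, [/\ (bb k <= i)%N, (i < cc k)%N & j = N + i%:Z].
Proof.
by case/mapP => i; rewrite mem_index_iota => /andP[h1 h2] ->; exists i.
Qed.

Lemma Sk_dis k k' j : k != k' -> j \in Sk k -> j \notin Sk k'.
Proof.
move=> ne /mem_Sk [i [h1 h2 ->]]; apply/negP => /mem_Sk [i' [h1' h2' /addrI /eqP]].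
rewrite eqz_nat => /eqP ei; subst i'.
case: (ltngtP k k') ne => // hk _.
  have : (k.+1 * l <= k' * l)%N by apply: leq_mul.
  by move: h2 h1'; rewrite /cc /bb; lia.
have : (k'.+1 * l <= k * l)%N by apply: leq_mul.
by move: h2' h1; rewrite /cc /bb; lia.
Qed.

Lemma pr_Ak k : pr (Rect (Sk k) (Bkk k)) = \prod_(i < l) (1 - rt i.+1).
Proof.
rewrite pr_Rect ?Sk_uniq // big_map.
rewrite (eq_big_seq (fun i => 1 - rt (bb k + l - i)%N)); last first.
  move=> i; rewrite mem_index_iota => /andP[h1 h2].
  rewrite ev_shift /Bkk addrAC subrr add0r absz_nat ev_le ccE //.
by rewrite ccE (rev_prod (fun t => 1 - rt t)) big_mkord.
Qed.

Lemma pr_Far k : pr (Far k) <= \sum_(l.+1 <= t < l.+1 + bb k) rt t.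
Proof.
apply: (le_trans (pr_bigU (bb k) (fun i => ev (N + i%:Z) [set v | (cc k - i < v)%N])
  (fun i => ev_meas _ _))).
rewrite -(rev_sum rt) le_eqVlt; apply/orP; left; apply/eqP.
by apply: eq_bigr => i _; rewrite ev_shift ccE.
Qed.

Lemma good x k : Rect (Sk k) (Bkk k) x -> ~ Far k x ->
  forall i, (i < cc k)%N -> (a (N + i%:Z) x <= cc k - i)%N.
Proof.
move=> /in_Rect hR hF i hi.
case: (ltnP i (bb k)) => hb.
  rewrite leqNgt; apply/negP => h; apply: hF.
  exact: (sub_bigU _ (fun i => ev (N + i%:Z) [set v | (cc k - i < v)%N]) (Ordinal hb) x h).
have := hR (N + i%:Z); rewrite /Bkk /= addrAC subrr add0r absz_nat; apply.
by apply/mapP; exists i => //; rewrite mem_index_iota hb.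
Qed.

End Pair.

Lemma bernoulli (c : R) (r : nat) : 0 <= c <= 1 -> (1 - c) ^+ r * (1 + r%:R * c) <= 1.
Proof.
move=> /andP[c0 c1]; elim: r => [|r IH]; first by rewrite expr0 mul0r addr0 mulr1.
have h0 : 0 <= (1 - c) ^+ r by apply: exprn_ge0; lra.
have r0 : 0 <= r%:R :> R by exact: ler0n.
have hh : 0 <= (1 - c) ^+ r * ((r%:R + 1) * (c * c)).
  by apply: mulr_ge0 => //; apply: mulr_ge0; nra.
rewrite exprSr -natr1.
have -> : (1 - c) ^+ r * (1 - c) * (1 + (r%:R + 1) * c) =
  (1 - c) ^+ r * (1 + r%:R * c) - (1 - c) ^+ r * ((r%:R + 1) * (c * c)) by ring.
lra.
Qed.

Lemma small0 (x C : R) : 0 <= C -> (forall r : nat, x <= C / r.+1%:R) -> x <= 0.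
Proof.
move=> C0 H; rewrite leNgt; apply/negP => x0.
have hb := @archi_boundP _ (C / x) (divr_ge0 C0 (ltW x0)).
set r := Num.Def.archi_bound (C / x) in hb.
have := H r; rewrite ler_pdivlMr ?ltr0Sn // -natr1.
move: hb; rewrite ltr_pdivrMr // => hb; nra.
Qed.

Lemma pair_ae (N : int) (i0 j0 : nat) :
  {ae P, forall x, component a x (N + i0%:Z) (N + j0%:Z)}.
Proof.
have [c0 [c0p c01 hc0]] := lowb.
set Dm := maxn i0 j0.
pose eps (r : nat) : R := (r.+1%:R ^+ 2)^-1.
have epsp r : 0 < eps r by rewrite invr_gt0 exprn_gt0 // ltr0Sn.
have [Lf hLf] := boolp.choice (fun r => tail_small _ (epsp r)).
pose l r := (Lf r).+1.
pose Y r := Acomp (Sk N Dm (l r)) (Bkk N Dm (l r)) r `|`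
  \big[setU/set0]_(k < r) Far N Dm (l r) k.
have mY r : measurable (Y r).
  apply: measurableU; first exact: Acomp_meas.
  by apply: bigsetU_measurable => k _; apply: bigsetU_measurable => i _; exact: ev_meas.
have badY r : ~` [set x | component a x (N + i0%:Z) (N + j0%:Z)] `<=` Y r.
  move=> x /= hx; rewrite /Y; apply: contrapT => hnY; apply: hx.
  case: (pselect (exists k : 'I_r, Rect (Sk N Dm (l r) k) (Bkk N Dm (l r) k) x)).
    move=> [k hk]; have hF : ~ Far N Dm (l r) k x.
      move=> hF; apply: hnY; right.
      exact: (sub_bigU _ (fun k => Far N Dm (l r) k) k x hF).
    have hg := good N Dm (l r) x k hk hF.
    apply: (comp_of x N (cc Dm (l r) k) i0 j0 hg).
      by rewrite /cc /Dm; apply: leq_trans (leq_maxl i0 j0) (leq_addr _ _).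
    by rewrite /cc /Dm; apply: leq_trans (leq_maxr i0 j0) (leq_addr _ _).
  move=> hne; exfalso; apply: hnY; left; rewrite /Acomp.
  apply/(in_bigI r (fun k => ~` Rect (Sk N Dm (l r) k) (Bkk N Dm (l r) k)) x) => k hk.
  apply: hne.
  by exists k.
have prY r : pr (Y r) <= (c0^-1 + 1) / r.+1%:R.
  apply: le_trans (prU _ _ (Acomp_meas _ _ _) _) _.
    by apply: bigsetU_measurable => k _; apply: bigsetU_measurable => i _; exact: ev_meas.
  have hA := @indep_compl (Sk N Dm (l r)) (Bkk N Dm (l r)) (Sk_uniq N Dm (l r))
     (@Sk_dis N Dm (l r)) r [::] (fun _ => set0) isT (fun k i _ => fun h => False_ind _ (notF h)).
  have R0 : Rect [::] (fun _ => set0) = setT by rewrite /Rect big_nil.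
  rewrite R0 setTI prT mul1r in hA; rewrite hA.
  set pi := \prod_(i < l r) (1 - rt i.+1).
  have hpi : c0 <= pi := hc0 (l r).
  have pi1 : pi <= 1.
    rewrite /pi -(pr_Ak N Dm (l r) 0); exact/pr_le1/Rect_meas.
  have h1 : \prod_(k < r) (1 - pr (Rect (Sk N Dm (l r) k) (Bkk N Dm (l r) k))) <= (1 - c0) ^+ r.
    have -> : (1 - c0) ^+ r = \prod_(k < r) (1 - c0) by rewrite prodr_const card_ord.
    apply: ler_prod => k _; rewrite pr_Ak -/pi; apply/andP; split; lra.
  have h2 : pr (\big[setU/set0]_(k < r) Far N Dm (l r) k) <= r%:R * eps r.
    have hs : \sum_(k < r) pr (Far N Dm (l r) k) <= \sum_(k < r) eps r.
      apply: ler_sum => k _; apply: le_trans (pr_Far _ _ _ _) _.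
      by apply: hLf; rewrite /l; lia.
    rewrite sumr_const card_ord in hs; rewrite mulr_natl.
    have mF : forall k, measurable (Far N Dm (l r) k).
      by move=> k; apply: bigsetU_measurable => i _; exact: ev_meas.
    exact: le_trans (pr_bigU r (fun k => Far N Dm (l r) k) mF) hs.
  have h3 := bernoulli c0 r (ltac:(lra) : 0 <= c0 <= 1).
  have h4 : 0 <= (1 - c0) ^+ r by apply: exprn_ge0; lra.
  have hr : 0 < r.+1%:R :> R by rewrite ltr0Sn.
  set s := r.+1%:R : R.
  have u0 : 0 < s^-1 by rewrite invr_gt0.
  have su : s * s^-1 = 1 by rewrite mulfV // gt_eqF.
  have w0 : 0 < c0^-1 by rewrite invr_gt0.
  have cw : c0 * c0^-1 = 1 by rewrite mulfV // gt_eqF.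
  have rs : r%:R = s - 1 by rewrite /s -natr1 addrK.
  have he : r%:R * eps r <= s^-1.
    rewrite /eps -/s -exprVn expr2 rs.
    have -> : (s - 1) * (s^-1 * s^-1) = s^-1 - s^-1 * s^-1.
      by rewrite mulrBl mulrA su !mul1r.
    have : 0 <= s^-1 * s^-1 by exact: mulr_ge0 (ltW u0) (ltW u0).
    by move=> h; rewrite gerBl.
  move: h1 h3 h4; set X := (1 - c0) ^+ r => h1 h3 h4; clearbody X.
  have hX : X * (s * c0) <= 1.
    have : 0 <= X * (1 - c0) by apply: mulr_ge0; lra.
    rewrite /s -natr1; nra.
  have hXu : X <= c0^-1 * s^-1.
    have -> : X = X * (s * c0) * (c0^-1 * s^-1).
      have -> : X * (s * c0) * (c0^-1 * s^-1) = X * ((s * s^-1) * (c0 * c0^-1)) by ring.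
      by rewrite su cw !mulr1.
    have h0 : 0 <= c0^-1 * s^-1 by exact: mulr_ge0 (ltW w0) (ltW u0).
    by rewrite -[X in _ <= X]mul1r; apply: ler_wpM2r.
  rewrite mulrDl mul1r; apply: lerD; [exact: le_trans h1 hXu|exact: le_trans h2 he].
pose Z := \bigcap_r Y r.
have mZ : measurable Z by apply: bigcap_measurable => //; exists 0%N.
have pZ : pr Z <= 0.
  apply: (@small0 _ (c0^-1 + 1)); first by rewrite addr_ge0 // invr_ge0 ltW.
  move=> r; apply: le_trans (prY r); apply: pr_le => //.
  by move=> x hx; exact: hx r I.
exists Z; split => //.
  by rewrite (prE _ mZ); congr (_%:E); apply/le_anti; rewrite pZ pr_ge0.
by move=> x hx r _; exact: badY r x hx.
Qed.

Definition toint (k : nat) : int := if odd k then Negz k./2 else Posz k./2.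

Lemma toint_surj n : exists k, toint k = n.
Proof.
case: n => n; [exists n.*2|exists n.*2.+1]; rewrite /toint /=.
  by rewrite odd_double doubleK.
by rewrite odd_double /= uphalf_double.
Qed.

Lemma main_sec : {ae P, forall x, forall n : int, component a x n = [set: int]}.
Proof.
have H : forall n m : int, {ae P, forall x, component a x n m}.
  move=> n m; pose D : nat := (absz n + absz m)%N.
  have := pair_ae (- D%:Z) (absz (n + D%:Z)) (absz (m + D%:Z)).
  have e1 : - D%:Z + (absz (n + D%:Z))%:Z = n by rewrite /D; lia.
  have e2 : - D%:Z + (absz (m + D%:Z))%:Z = m by rewrite /D; lia.
  by rewrite e1 e2.
have H2 : {ae P, forall x, forall k1 k2 : nat, component a x (toint k1) (toint k2)}.
  by apply: ae_foralln => k1; apply: ae_foralln => k2; exact: H.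
apply: filterS H2 => x hx n; apply/seteqP; split => // m _.
have [k1 <-] := toint_surj n; have [k2 <-] := toint_surj m; exact: hx.
Qed.

End Main.

Theorem mainTheorem7 (d : measure_display) (T : measurableType d) (R : realType)
  (P : probability T R) (a : int -> T -> nat) :
  nat_rv_family a ->
  mutually_independent P a ->
  identically_distributed P a ->
  (forall (n : int) (x : T), (1 <= a n x)%N) ->
  (\int[P]_x ((a 0%R x)%:R : R)%:E < +oo)%E ->
  (0 < P (a 0%R @^-1` [set 1%N]))%E ->
  {ae P, forall x, forall n : int, component a x n = [set: int]}.
Proof.
move=> h1 h2 h3 h4 h5 h6; exact: main_sec.
Qed.
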